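(* For every $k\ge1$ there is a constant $C_k>0$ such that the following holds. Let $\tau\in\mathcal S_k$, $n\ge k$, let $\pi$ be a uniformly random permutation in $\mathcal S_n$, and let $X_{\tau,n}$ be the number of occurrences of $\tau$ in $\pi$. Then for every $t\ge\binom{n-1}{k-1}$, \[\Pr\big(|X_{\tau,n}-E[X_{\tau,n}]|>t\big)\le2\exp\Big(-\frac{t^2}{C_kn^{2k-1}}\Big).\]
   Context: $\mathcal S_n$ is the set of linear permutations $\pi=[\pi_1\ldots\pi_n]$ of $[n]$. An occurrence of a pattern $\tau\in\mathcal S_k$ in $\pi$ is a choice of indices $1\le i_1<\dots<i_k\le n$ such that for all $s,t$, $\pi_{i_s}<\pi_{i_t}$ if and only if $\tau_s<\tau_t$. *)

(* Defs.v *)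
From mathcomp Require Import all_boot all_fingroup.
From Stdlib Require Import Reals.
Set Implicit Arguments. Unset Strict Implicit. Unset Printing Implicit Defensive.

(* f : 'I_k -> 'I_n encodes indices i_1 < ... < i_k (0-based); pi : 'S_n maps
   position i to value pi i (0-based values; order is what matters). *)
Definition is_occ (k n : nat) (tau : 'S_k) (pi : 'S_n) (f : {ffun 'I_k -> 'I_n}) : bool :=
  [forall s : 'I_k, forall t : 'I_k,
     ((s < t)%N ==> (f s < f t)%N) && ((pi (f s) < pi (f t))%N == (tau s < tau t)%N)].

Definition occ (k n : nat) (tau : 'S_k) (pi : 'S_n) : nat :=
  #|[pred f : {ffun 'I_k -> 'I_n} | is_occ tau pi f]|.

Definition mean_occ (k n : nat) (tau : 'S_k) : R :=
  (INR (\sum_(pi : 'S_n) occ tau pi)%N / INR (n`!))%R.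

Definition Rltb (x y : R) : bool := if Rlt_dec x y then true else false.

Definition tail_prob (k n : nat) (tau : 'S_k) (t : R) : R :=
  (INR #|[pred pi : 'S_n | Rltb t (Rabs (INR (occ tau pi) - mean_occ n tau))]|
   / INR (n`!))%R.

(* Main.v *)
Require Import Defs.
From Stdlib Require Import Reals.
From mathcomp Require Import all_boot all_fingroup all_algebra.
From mathcomp Require Import Rstruct.
From mathcomp Require Import lra ring zify.
From mathcomp Require Import order.
From Stdlib Require Import Lia.
Lemma card_fix (k n : nat) (i : 'I_k) (p : 'I_n) :
  #|[pred f : {ffun 'I_k -> 'I_n} | f i == p]| = n ^ k.-1.
Proof.
pose F := fun x : 'I_k => if x == i then pred1 p else predT.
have -> : #|[pred f : {ffun 'I_k -> 'I_n} | f i == p]| = #|(family F : simpl_pred {ffun 'I_k -> 'I_n})|.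
  apply: eq_card => f; rewrite !inE; apply/eqP/familyP => [fi x|H].
    by rewrite /F; case: eqP => [->|_]; rewrite inE ?fi.
  by have := H i; rewrite /F eqxx inE => /eqP.
rewrite card_family foldrE big_image /=.
rewrite (bigD1 i) //= /F eqxx card1 mul1n.
rewrite (eq_bigr (fun _ => n)); last first.
  by move=> x /negbTE ->; rewrite card_ord.
have -> : k.-1 = #|predC1 i| by rewrite cardC1 card_ord.
rewrite -prod_nat_const.
by apply: eq_bigl => x; rewrite !inE.
Qed.


Lemma card_sumb (T : finType) (P : pred T) : \sum_(x : T) (P x : nat) = #|P|.
Proof.
rewrite -sum1_card [RHS]big_mkcond /=; apply: eq_bigr => x _ => //.
Qed.

Lemma touch_card k n (p q : 'I_n) :
  #|[pred f : {ffun 'I_k -> 'I_n} | [exists i, (f i == p) || (f i == q)]]| <= 2 * k * n ^ k.-1.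
Proof.
rewrite -sum1_card.
apply: (@leq_trans (\sum_(f : {ffun 'I_k -> 'I_n}) \sum_(i : 'I_k) ((f i == p) + (f i == q)))).
  rewrite big_mkcond /=; apply: leq_sum => f _; rewrite inE.
  case: ifP => // /existsP[i hi]; rewrite (bigD1 i) //=.
  by apply: (leq_trans _ (leq_addr _ _)); case/orP: hi => /eqP ->; rewrite eqxx // addn1 ltnS.
rewrite exchange_big /=.
rewrite (eq_bigr (fun _ => n ^ k.-1 + n ^ k.-1)); last first.
  by move=> i _; rewrite big_split /= !card_sumb !card_fix.
rewrite sum_nat_const card_ord; lia.
Qed.

Lemma occ_swap k n (tau : 'S_k) (sg : 'S_n) (a b : 'I_n) (T : nat) :
  #|[pred f : {ffun 'I_k -> 'I_n} | [exists i, (f i == (sg^-1)%g a) || (f i == (sg^-1)%g b)]]| <= T ->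
  (occ tau (sg * tperm a b)%g <= occ tau sg + T) /\ (occ tau sg <= occ tau (sg * tperm a b)%g + T).
Proof.
set p := (sg^-1)%g a; set q := (sg^-1)%g b.
set touch := [pred f : {ffun 'I_k -> 'I_n} | [exists i, (f i == p) || (f i == q)]].
move=> hT.
have E : forall x, x != p -> x != q -> (sg * tperm a b)%g x = sg x.
  move=> x xp xq; rewrite permM tpermD //.
    by apply/eqP => e; move/eqP: xp; apply; rewrite /p e permK.
  by apply/eqP => e; move/eqP: xq; apply; rewrite /q e permK.
have eqv : forall f, ~~ touch f -> is_occ tau (sg * tperm a b)%g f = is_occ tau sg f.
  move=> f; rewrite inE negb_exists => /forallP nt.
  have nt' : forall i, (f i != p) && (f i != q) by move=> i; have := nt i; rewrite negb_or.
  rewrite /is_occ; apply: eq_forallb => s1; apply: eq_forallb => s2.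
  by have /andP[? ?] := nt' s1; have /andP[? ?] := nt' s2; rewrite !E.
have spl : forall X, occ tau X = #|[predI [pred f | is_occ tau X f] & touch]| + #|[predD [pred f | is_occ tau X f] & touch]|.
  by move=> X; rewrite cardID.
have leI : forall X, #|[predI [pred f | is_occ tau X f] & touch]| <= #|touch|.
  move=> X; apply: subset_leq_card; apply/subsetP => f; rewrite !inE => /andP[].
  by [].
have eD : #|[predD [pred f | is_occ tau (sg * tperm a b)%g f] & touch]| = #|[predD [pred f | is_occ tau sg f] & touch]|.
  apply: eq_card => f; rewrite !inE.
  by case e': [exists i, _] => //=; rewrite eqv // inE e'.
have l1 := leI (sg * tperm a b)%g; have l2 := leI sg.
have s1 := spl (sg * tperm a b)%g; have s2 := spl sg.
have : #|touch| <= T by [].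
move=> hT2; split; lia.
Qed.

Lemma occ_le k n (tau : 'S_k) (pi : 'S_n) : occ tau pi <= n ^ k.
Proof. by rewrite /occ; apply: leq_trans (max_card _) _; rewrite card_ffun !card_ord. Qed.

Import Order.TTheory GRing.Theory Num.Theory.
Local Open Scope ring_scope.
Bind Scope ring_scope with R.

Definition ex (x : R) : R := exp x.
Arguments ex x%_ring_scope.

Lemma ex_gt0 (z : R) : 0 < ex z.
Proof. by apply/RltP; apply: exp_pos. Qed.

Lemma ex_ge1 (z : R) : 1 + z <= ex z.
Proof. by apply/RleP; apply: exp_ineq1_le. Qed.

Lemma exD (x y : R) : ex (x + y) = ex x * ex y.
Proof. by rewrite /ex expRD. Qed.

Lemma ex0 : ex 0 = 1.
Proof. exact: expR0. Qed.

Lemma ex_quad {z : R} : -(1/2) <= z -> z <= 1/2 -> ex z <= 1 + z + 2 * z^+2.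
Proof.
move=> h1 h2.
have e1 := ex_ge1 (- z).
have e2 : ex (- z) * ex z = 1 by rewrite -exD addNr ex0.
have ep := ex_gt0 z.
have e3 : ex z * (1 - z) <= 1.
  have : ex z * (1 - z) <= ex z * ex (-z) by rewrite ler_pM2l //; lra.
  by rewrite [ex z * ex _]mulrC e2.
have e4 : 1 <= (1 + z + 2 * z^+2) * (1 - z) by nra.
nra.
Qed.

Lemma ex_mono (x y : R) : x <= y -> ex x <= ex y.
Proof.
move=> h; have [->|ne] := eqVneq x y; first by [].
rewrite /ex; apply/RleP; left; apply: exp_increasing; apply/RltP; by rewrite lt_neqAle ne h.
Qed.

Lemma hoeff (I : finType) (V : {set I}) (y : I -> R) (c s : R) :
  0 <= s -> 0 <= c -> s * c <= 1/2 -> \sum_(a in V) y a = 0 ->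
  (forall a, a \in V -> `|y a| <= c) ->
  \sum_(a in V) ex (s * y a) <= #|V|%:R * ex (2 * s^+2 * c^+2).
Proof.
move=> s0 c0 sc sum0 yb.
apply: (@le_trans _ _ (\sum_(a in V) (1 + s * y a + 2 * s^+2 * c^+2))).
  apply: ler_sum => a aV; have := yb a aV; rewrite ler_norml => /andP[l1 l2].
  have {}l1 : - c <= y a := l1.
  have {}l2 : y a <= c := l2.
  have p1 : 0 <= s * y a + s * c by rewrite -mulrDr; apply: mulr_ge0; lra.
  have p2 : 0 <= s * c - s * y a by rewrite -mulrBr; apply: mulr_ge0; lra.
  have hz1 : -(1/2) <= s * y a by lra.
  have hz2 : s * y a <= 1/2 by lra.
  have hq := ex_quad hz1 hz2. apply: (le_trans hq).
  have : (s * y a)^+2 <= s^+2 * c^+2.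
    have hy2 : y a ^+ 2 <= c ^+ 2 by nra.
    rewrite exprMn; apply: ler_wpM2l; [exact: sqr_ge0 | exact: hy2].
  lra.
rewrite big_split big_split /= -mulr_sumr sum0 mulr0 addr0 !sumr_const.
set w := 2 * s ^+ 2 * c ^+ 2.
have := ex_ge1 w.
rewrite -[1 *+ #|V|]mulr_natl mulr1 -mulr_natl.
have : (0 : R) <= #|V|%:R by apply: ler0n.
move=> hN hw. rewrite !mulr1 -mulr_natl.
nra.
Qed.

Section Generic.
Variables (T J : finType) (key : T -> J) (h : T -> R) (c s : R).
Hypothesis c0 : 0 <= c.
Hypothesis s0 : 0 <= s.
Hypothesis sc : s * c <= 1/2.

Definition mu (A : {set T}) : R := (\sum_(p in A) h p) / #|A|%:R.

Lemma mu_mul (A : {set T}) : A != set0 -> mu A * #|A|%:R = \sum_(p in A) h p.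
Proof.
move=> nz; rewrite /mu -mulrA mulVf ?mulr1 //.
by rewrite pnatr_eq0 cards_eq0.
Qed.

Lemma sum_part (A : {set T}) (F : T -> R) :
  \sum_(p in A) F p =
  \sum_(a in [set a | [set p in A | key p == a] != set0])
     \sum_(p in [set p in A | key p == a]) F p.
Proof.
rewrite (partition_big key predT) //=.
rewrite (bigID (fun a => a \in [set a | [set p in A | key p == a] != set0])) /=.
rewrite [X in _ + X]big1 ?addr0; last first.
  move=> a; rewrite inE negbK => /eqP e0.
  rewrite big1 // => p /andP[pA /eqP kp].
  have : p \in [set p in A | key p == a] by rewrite inE pA kp eqxx.
  by rewrite e0 inE.
apply: eq_big => a //; move=> _.
by apply: eq_bigl => p; rewrite inE.
Qed.

Lemma step (A : {set T}) (B : R) :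
  A != set0 -> 0 <= B ->
  (forall a b, [set p in A | key p == a] != set0 -> [set p in A | key p == b] != set0 ->
     #|[set p in A | key p == a]| = #|[set p in A | key p == b]|) ->
  (forall a b, [set p in A | key p == a] != set0 -> [set p in A | key p == b] != set0 ->
     `|mu [set p in A | key p == a] - mu [set p in A | key p == b]| <= c) ->
  (forall a, [set p in A | key p == a] != set0 ->
     \sum_(p in [set p in A | key p == a]) ex (s * (h p - mu [set p in A | key p == a]))
       <= #|[set p in A | key p == a]|%:R * B) ->
  \sum_(p in A) ex (s * (h p - mu A)) <= #|A|%:R * B * ex (2 * s^+2 * c^+2).
Proof.
move=> An0 B0 H1 H2 H3.
set S := fun a => [set p in A | key p == a].
set V := [set a | S a != set0].
have [p0 p0A] := set0Pn _ An0.
have a0V : key p0 \in V by rewrite inE; apply/set0Pn; exists p0; rewrite inE p0A eqxx.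
set m := #|S (key p0)|.
have Sm : forall a, a \in V -> #|S a| = m.
  by move=> a aV; apply: H1; [move: aV | move: a0V]; rewrite inE.
have m0 : (0 : R) < m%:R.
  rewrite ltr0n /m lt0n cards_eq0; by move: a0V; rewrite inE.
have cardA : #|A|%:R = #|V|%:R * m%:R :> R.
  have := sum_part A (fun _ => 1); rewrite !sumr_const.
  move=> ->; rewrite (eq_bigr (fun _ => m%:R)); last by move=> a aV; rewrite sumr_const Sm.
  by rewrite sumr_const -mulr_natl ?mul1r ?mulr1; exact: (esym (mulr_natl _ _)).
have V0 : (0 : R) < #|V|%:R by rewrite ltr0n card_gt0; apply/set0Pn; exists (key p0).
set mA := mu A.
have sumh : \sum_(p in A) h p = m%:R * \sum_(a in V) mu (S a).
  rewrite sum_part mulr_sumr; apply: eq_bigr => a aV.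
  by rewrite -(Sm a aV) mulrC mu_mul //; move: aV; rewrite inE.
have mAe : mA * #|V|%:R = \sum_(a in V) mu (S a).
  have := @mu_mul A An0; rewrite -/mA sumh cardA => e.
  apply: (mulIf (lt0r_neq0 m0)); by rewrite -mulrA e mulrC.
have inV : forall a, a \in V -> S a != set0 by move=> a; rewrite inE.
have ylo : forall a, a \in V -> mu (S a) - c <= mA.
  move=> a aV; rewrite -(ler_pM2r V0) mAe.
  have -> : (mu (S a) - c) * #|V|%:R = \sum_(b in V) (mu (S a) - c) by rewrite sumr_const mulr_natr.
  apply: ler_sum => b bV; have := H2 a b (inV a aV) (inV b bV).
  rewrite ler_norml => /andP[l1 l2]; lra.
have yhi : forall a, a \in V -> mA <= mu (S a) + c.
  move=> a aV; rewrite -(ler_pM2r V0) mAe.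
  have -> : (mu (S a) + c) * #|V|%:R = \sum_(b in V) (mu (S a) + c) by rewrite sumr_const mulr_natr.
  apply: ler_sum => b bV; have := H2 a b (inV a aV) (inV b bV).
  rewrite ler_norml => /andP[l1 l2]; lra.
have sumV : \sum_(a in V) (mu (S a) - mA) = 0.
  by rewrite sumrB sumr_const -mAe mulr_natr subrr.
have key1 : \sum_(p in A) ex (s * (h p - mA)) =
   \sum_(a in V) (ex (s * (mu (S a) - mA)) * \sum_(p in S a) ex (s * (h p - mu (S a)))).
  rewrite sum_part; apply: eq_bigr => a aV; rewrite mulr_sumr; apply: eq_bigr => p _.
  by rewrite -exD; congr ex; ring.
rewrite key1.
apply: (@le_trans _ _ (\sum_(a in V) (ex (s * (mu (S a) - mA)) * (m%:R * B)))).
  apply: ler_sum => a aV; apply: ler_wpM2l; first exact: ltW (ex_gt0 _).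
  by rewrite -(Sm a aV); apply: H3; apply: inV.
rewrite -mulr_suml mulrC.
have hf := @hoeff _ V (fun a => mu (S a) - mA) c s s0 c0 sc sumV.
have := hf (fun a aV => ltac:(rewrite ler_norml; apply/andP; split; [have := yhi a aV | have := ylo a aV]; lra)).
rewrite cardA => hh.
have mB : 0 <= m%:R * B by apply: mulr_ge0 => //; apply: ltW.
have := ler_wpM2l mB hh.
rewrite !mulrA. move=> hh2; apply: (le_trans hh2); rewrite le_eqVlt; apply/orP; left; apply/eqP; ring.
Qed.
End Generic.
Arguments mu {T}.


Section PermPart.
Variables (n : nat) (h : 'S_n -> R) (c s : R).
Hypothesis c0 : 0 <= c.
Hypothesis s0 : 0 <= s.
Hypothesis sc : s * c <= 1/2.
Hypothesis hc : forall (p : 'S_n) (a b : 'I_n), `|h (p * tperm a b)%g - h p| <= c.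

Definition Apre (j : nat) (p0 : 'S_n) : {set 'S_n} :=
  [set p : 'S_n | [forall i : 'I_n, (i < j)%N ==> (p i == p0 i)]].

Lemma ApreP j (p0 p : 'S_n) : reflect (forall i : 'I_n, (i < j)%N -> p i = p0 i) (p \in Apre j p0).
Proof.
rewrite inE; apply: (iffP forallP) => H i.
  by move=> ij; have := H i; rewrite ij => /eqP.
by apply/implyP => ij; rewrite H.
Qed.

Lemma Apre_self j (p0 : 'S_n) : p0 \in Apre j p0.
Proof. by apply/ApreP. Qed.

Lemma Apre_big j (p0 : 'S_n) : (n <= j)%N -> Apre j p0 = [set p0].
Proof.
move=> nj; apply/setP => p; rewrite in_set1; apply/ApreP/eqP => [H|->] //.
apply/permP => i; apply: H; exact: leq_trans (ltn_ord i) nj.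
Qed.

Section Step.
Variables (j : nat) (p0 : 'S_n) (ltjn : (j < n)%N).
Let jj : 'I_n := Ordinal ltjn.
Let A := Apre j p0.
Let S (a : 'I_n) := [set p in A | p jj == a].

Lemma inS (p : 'S_n) a : (p \in S a) = (p \in A) && (p jj == a).
Proof. by rewrite /S !inE. Qed.

Lemma Sa_eq (p1 : 'S_n) : p1 \in A -> S (p1 jj) = Apre j.+1 p1.
Proof.
move=> /ApreP p1A; apply/setP => p; rewrite inS; apply/andP/ApreP.
  move=> [/ApreP pA /eqP pj] i; rewrite ltnS leq_eqVlt => /orP[/eqP ij|ij].
    by have -> : i = jj by apply: val_inj.
  by rewrite pA // p1A.
move=> H; split; last by apply/eqP; apply: H.
by apply/ApreP => i ij; rewrite H ?p1A //; apply: ltnW.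
Qed.

Lemma A_neq (q : 'S_n) (i : 'I_n) : q \in A -> (i < j)%N -> p0 i != q jj.
Proof.
move=> /ApreP qA ij; rewrite -(qA i ij) (inj_eq perm_inj).
apply/eqP => e; move: ij; rewrite e /= ltnn //.
Qed.

Lemma memS_dir (pa pb p : 'S_n) : pa \in A -> pb \in A ->
  p \in S (pa jj) -> (p * tperm (pa jj) (pb jj))%g \in S (pb jj).
Proof.
move=> paA pbA; rewrite !inS => /andP[/ApreP pA /eqP pj].
apply/andP; split; last by rewrite permM pj tpermL.
apply/ApreP => i ij; rewrite permM pA // tpermD //.
  by rewrite eq_sym A_neq.
by rewrite eq_sym A_neq.
Qed.

Lemma memS (pa pb p : 'S_n) : pa \in A -> pb \in A ->
  ((p * tperm (pa jj) (pb jj))%g \in S (pb jj)) = (p \in S (pa jj)).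
Proof.
move=> paA pbA; apply/idP/idP; last exact: memS_dir.
move=> H; have := @memS_dir pb pa _ pbA paA H.
have -> // : ((p * tperm (pa jj) (pb jj)) * tperm (pb jj) (pa jj))%g = p.
by apply/permP => x; rewrite !permM tpermC tpermK.
Qed.

Lemma reidxR (pa pb : 'S_n) (F : 'S_n -> R) : pa \in A -> pb \in A ->
  \sum_(p in S (pb jj)) F p = \sum_(p in S (pa jj)) F (p * tperm (pa jj) (pb jj))%g.
Proof.
move=> paA pbA; rewrite (reindex_inj (mulIg (tperm (pa jj) (pb jj)))) /=.
by apply: eq_bigl => p; apply: memS.
Qed.

Lemma reidxN (pa pb : 'S_n) (F : 'S_n -> nat) : pa \in A -> pb \in A ->
  (\sum_(p in S (pb jj)) F p = \sum_(p in S (pa jj)) F (p * tperm (pa jj) (pb jj))%g)%N.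
Proof.
move=> paA pbA; rewrite (reindex_inj (mulIg (tperm (pa jj) (pb jj)))) /=.
by apply: eq_bigl => p; apply: memS.
Qed.

Lemma nzS a : S a != set0 -> exists2 pa, pa \in A & a = pa jj.
Proof.
move=> /set0Pn[pa]; rewrite inS => /andP[paA /eqP <-]; by exists pa.
Qed.

Lemma cardS {pa pb : 'S_n} : pa \in A -> pb \in A -> #|S (pa jj)| = #|S (pb jj)|.
Proof.
move=> paA pbA; rewrite -!sum1_card (@reidxN pa pb (fun _ => 1%N) paA pbA) //.
Qed.

Lemma muS {pa pb : 'S_n} : pa \in A -> pb \in A ->
  `|mu h (S (pa jj)) - mu h (S (pb jj))| <= c.
Proof.
move=> paA pbA.
have ne : S (pa jj) != set0 by apply/set0Pn; exists pa; rewrite inS paA eqxx.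
have ne' : S (pb jj) != set0 by apply/set0Pn; exists pb; rewrite inS pbA eqxx.
pose m : R := #|S (pa jj)|%:R.
have m0 : 0 < m by rewrite ltr0n lt0n cards_eq0.
have e1 := @mu_mul _ h _ ne.
have e2 := @mu_mul _ h _ ne'.
rewrite -(cardS paA pbA) -/m (@reidxR pa pb h paA pbA) in e2.
rewrite -/m in e1.
have e3 : (mu h (S (pa jj)) - mu h (S (pb jj))) * m =
   \sum_(p in S (pa jj)) (h p - h (p * tperm (pa jj) (pb jj))%g).
  by rewrite mulrBl e1 e2 sumrB.
rewrite -(ler_pM2r m0).
have -> : `|mu h (S (pa jj)) - mu h (S (pb jj))| * m = `|(mu h (S (pa jj)) - mu h (S (pb jj))) * m|.
  by rewrite normrM (gtr0_norm m0).
rewrite e3; apply: le_trans (ler_norm_sum _ _ _) _.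
apply: (@le_trans _ _ (\sum_(p in S (pa jj)) c)).
  by apply: ler_sum => p _; rewrite distrC hc.
by rewrite sumr_const mulr_natr.
Qed.
Lemma step_perm (B : R) : 0 <= B ->
  (forall p1, p1 \in A -> \sum_(p in Apre j.+1 p1) ex (s * (h p - mu h (Apre j.+1 p1)))
        <= #|Apre j.+1 p1|%:R * B) ->
  \sum_(p in A) ex (s * (h p - mu h A)) <= #|A|%:R * B * ex (2 * s^+2 * c^+2).
Proof.
move=> B0 IH.
apply: (@step _ _ (fun p : 'S_n => p jj) h c s c0 s0 sc A B _ B0).
- by apply/set0Pn; exists p0; apply: Apre_self.
- by move=> a b /nzS[pa paA ->] /nzS[pb pbA ->]; exact: cardS.
- by move=> a b /nzS[pa paA ->] /nzS[pb pbA ->]; exact: muS.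
- move=> a /nzS[pa paA ->].
  have e : S (pa jj) = Apre j.+1 pa := @Sa_eq pa paA.
  rewrite /S in e; rewrite e; exact: IH.
Qed.

End Step.
Lemma ex_ge1' (w : R) : 0 <= w -> 1 <= ex w.
Proof. move=> w0; have := ex_ge1 w; lra. Qed.

Lemma main_ind d : forall j (p0 : 'S_n), (n <= j + d)%N ->
  \sum_(p in Apre j p0) ex (s * (h p - mu h (Apre j p0)))
    <= #|Apre j p0|%:R * ex (2 * d%:R * s^+2 * c^+2).
Proof.
have single : forall j (p0 : 'S_n) B, (n <= j)%N -> 1 <= B ->
    \sum_(p in Apre j p0) ex (s * (h p - mu h (Apre j p0))) <= #|Apre j p0|%:R * B.
  move=> j p0 B nj B1; rewrite Apre_big // big_set1 /mu big_set1 cards1 divr1 subrr mulr0 ex0 mul1r.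
  exact: B1.
have nn : forall e : nat, 0 <= 2 * e%:R * s^+2 * c^+2.
  move=> e; apply: mulr_ge0; last exact: sqr_ge0.
  apply: mulr_ge0; last exact: sqr_ge0.
  by apply: mulr_ge0; [lra | apply: ler0n].
elim: d => [|d IH] j p0 hj.
  by apply: single; [rewrite addn0 in hj | apply: ex_ge1'].
case: (leqP n j) => [nj | ltjn].
  by apply: single => //; apply: ex_ge1'.
have := @step_perm j p0 ltjn (ex (2 * d%:R * s^+2 * c^+2)) (ltW (ex_gt0 _)).
have IH' : forall p1 : 'S_n, p1 \in Apre j p0 ->
   \sum_(p in Apre j.+1 p1) ex (s * (h p - mu h (Apre j.+1 p1)))
     <= #|Apre j.+1 p1|%:R * ex (2 * d%:R * s ^+ 2 * c ^+ 2).
  by move=> p1 _; apply: IH; rewrite addSn -addnS.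
move=> /(_ IH') H; apply: (le_trans H).
have -> : 2 * d.+1%:R * s ^+ 2 * c ^+ 2 = 2 * d%:R * s ^+ 2 * c ^+ 2 + 2 * s ^+ 2 * c ^+ 2.
  by rewrite -[d.+1]addn1 natrD; ring.
by rewrite exD mulrA.
Qed.

Lemma sum_sub (X : {set 'S_n}) (F : 'S_n -> R) : (forall p, 0 <= F p) ->
  \sum_(p in X) F p <= \sum_p F p.
Proof.
move=> F0; rewrite big_mkcond /=; apply: ler_sum => p _.
by case: (p \in X) => //.
Qed.

Lemma tail_one (t : R) :
  #|[set p | mu h [set: 'S_n] + t < h p]|%:R
     <= n`!%:R * ex (2 * n%:R * s^+2 * c^+2 - s * t).
Proof.
have AT : Apre 0 1 = [set: 'S_n] by apply/setP => p; rewrite in_setT; apply/ApreP.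
have := @main_ind n 0 1 (leqnn n); rewrite AT cardsT card_Sn => H.
set mu0 := mu h [set: 'S_n] in H *.
have eT : \sum_(p in [set: 'S_n]) ex (s * (h p - mu0)) = \sum_p ex (s * (h p - mu0)).
  by apply: eq_bigl => p; rewrite in_setT.
rewrite eT in H.
have e1 : #|[set p | mu0 + t < h p]|%:R = \sum_(p in [set p | mu0 + t < h p]) (1:R).
  by rewrite sumr_const.
rewrite e1.
apply: (@le_trans _ _ (\sum_(p in [set p | mu0 + t < h p]) ex (s * (h p - mu0) - s * t))).
  apply: ler_sum => p; rewrite inE => hp; apply: ex_ge1'.
  rewrite -mulrBr; apply: mulr_ge0 => //; lra.
apply: le_trans; first by apply: sum_sub => p; exact: ltW (ex_gt0 _).
under eq_bigr do rewrite exD.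
rewrite -mulr_suml [ex (_ - s * t)]exD mulrA.
apply: ler_wpM2r => //; exact: ltW (ex_gt0 _).
Qed.

End PermPart.

Lemma nat_abs (o1 o2 T : nat) : (o1 <= o2 + T)%N -> (o2 <= o1 + T)%N ->
  `|(o1%:R : R) - o2%:R| <= T%:R.
Proof.
move=> h1 h2; rewrite ler_norml.
have e1 : (o1%:R : R) <= o2%:R + T%:R by rewrite -natrD ler_nat.
have e2 : (o2%:R : R) <= o1%:R + T%:R by rewrite -natrD ler_nat.
apply/andP; split; lra.
Qed.

Lemma mu_opp (T : finType) (h : T -> R) (A : {set T}) : mu (fun p => - h p) A = - mu h A.
Proof. by rewrite /mu sumrN mulNr. Qed.

Lemma Rltb_true (x y : R) : Defs.Rltb x y -> x < y.
Proof. by rewrite /Defs.Rltb; case: (Rlt_dec x y) => [hh _|//]; apply/RltP. Qed.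

Lemma abs_split (t y : R) : t < Rabs y -> t < y \/ t < - y.
Proof.
move=> H; case: (Rle_or_lt 0 y) => hy.
  by left; rewrite (Rabs_pos_eq _ hy) in H.
by right; rewrite (Rabs_left _ hy) in H.
Qed.

Lemma alg1 (t N c : R) : N != 0 -> c != 0 -> t / (4 * N * c^+2) * c = t / (4 * N * c).
Proof. move=> hN hc; field; by rewrite hN hc. Qed.

Lemma alg2 (t N K M : R) : N != 0 -> K != 0 -> M != 0 ->
  2 * N * (t / (4 * N * (2 * K * M)^+2))^+2 * (2 * K * M)^+2 - t / (4 * N * (2 * K * M)^+2) * t
  = - t^+2 / (32%:R * K * K * (N * M^+2)).
Proof. move=> hN hK hM; field; by rewrite hN hK hM. Qed.

Lemma final_ring k n (tau : 'S_k) (t : R) : (1 <= k)%N -> (k <= n)%N -> 0 <= t ->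
  #|[pred pi : 'S_n | Defs.Rltb t (Rabs (INR (occ tau pi) - mean_occ n tau))]|%:R / n`!%:R
   <= 2 * ex (- t^+2 / ((32 * k * k)%:R * n%:R ^+ (2*k-1))).
Proof.
move=> k1 kn t0.
have n1 : (1 <= n)%N by apply: leq_trans kn.
pose h := fun pi : 'S_n => (occ tau pi)%:R : R.
pose mu0 := mu h [set: 'S_n].
have nf0 : (0 : R) < n`!%:R by rewrite ltr0n fact_gt0.
have meanE : mean_occ n tau = mu0.
  rewrite /mean_occ /mu0 /mu !INRE natr_sum RdivE cardsT card_Sn.
  by congr (_ / _); apply: eq_bigl => p; rewrite in_setT.
pose T := (2 * k * n ^ k.-1)%N.
pose c : R := T%:R.
have hc : forall (p : 'S_n) (a b : 'I_n), `|h (p * tperm a b)%g - h p| <= c.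
  move=> p a b; have [l1 l2] := @occ_swap k n tau p a b T (@touch_card k n _ _).
  exact: nat_abs.
have hc' : forall (p : 'S_n) (a b : 'I_n), `|(fun q => - h q) (p * tperm a b)%g - (fun q => - h q) p| <= c.
  by move=> p a b /=; rewrite -opprD normrN; apply: hc.
have c0 : 0 <= c by apply: ler0n.
have hb : forall p, 0 <= h p <= (n ^ k)%:R.
  by move=> p; rewrite ler0n /= ler_nat occ_le.
have mub : 0 <= mu0 <= (n ^ k)%:R.
  rewrite /mu0 /mu cardsT card_Sn; apply/andP; split.
    by apply: divr_ge0; [apply: sumr_ge0 => p _; case/andP: (hb p) | apply: ltW].
  rewrite ler_pdivrMr //.
  apply: (@le_trans _ _ (\sum_(p in [set: 'S_n]) (n^k)%:R)).
    by apply: ler_sum => p _; case/andP: (hb p).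
  by rewrite sumr_const cardsT card_Sn mulr_natr.
set P := [pred pi : 'S_n | _].
pose S1 := [set p : 'S_n | mu0 + t < h p].
pose S2 := [set p : 'S_n | - mu0 + t < - h p].
have PU : (#|P| <= #|S1| + #|S2|)%N.
  apply: (@leq_trans #|[predU S1 & S2]|).
    apply: subset_leq_card; apply/subsetP => p; rewrite !inE => /Rltb_true.
    rewrite INRE meanE -/(h p) => /abs_split [hh|hh]; apply/orP; [left|right]; lra.
  by rewrite -cardUI leq_addr.
have PUR : (#|P|%:R : R) <= #|S1|%:R + #|S2|%:R by rewrite -natrD ler_nat.
have exP : forall w, 0 <= 2 * ex w by move=> w; have := ex_gt0 w; lra.
case: (lerP (n^k)%:R t) => ht.
  have e1 : S1 = set0.
    apply/setP => p; rewrite !inE; apply/negbTE; rewrite -leNgt.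
    by case/andP: (hb p) => ? ?; case/andP: mub => ? ?; lra.
  have e2 : S2 = set0.
    apply/setP => p; rewrite !inE; apply/negbTE; rewrite -leNgt.
    by case/andP: (hb p) => ? ?; case/andP: mub => ? ?; lra.
  have P0 : #|P| = 0%N by move: PU; rewrite e1 e2 !cards0; case: #|P|.
  by rewrite P0 mul0r.
pose N : R := n%:R. pose K : R := k%:R.
have N0 : 0 < N by rewrite ltr0n.
have K1 : 1 <= K by rewrite ler1n.
pose M : R := N ^+ k.-1.
have M0 : 0 < M by apply: exprn_gt0.
have cE : c = 2 * K * M by rewrite /c /T !natrM natrX.
have NkE : (n^k)%:R = N * M :> R by rewrite natrX /N /M -exprS prednK.
have E2 : N ^+ (2*k-1) = N * M^+2 :> R.
  rewrite /M -exprM -exprS; congr (_ ^+ _); lia.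
have cp : 0 < c by rewrite cE; apply: mulr_gt0 => //; apply: mulr_gt0 => //; lra.
pose s : R := t / (4 * N * c^+2).
have s0 : 0 <= s.
  apply: divr_ge0 => //; apply: mulr_ge0; [apply: mulr_ge0; lra | exact: sqr_ge0].
have sc : s * c <= 1/2.
  have -> : s * c = t / (4 * N * c) by rewrite /s alg1 // lt0r_neq0.
  rewrite ler_pdivrMr; last by apply: mulr_gt0 => //; apply: mulr_gt0 => //; lra.
  rewrite NkE in ht; rewrite cE.
  have : N * M <= K * (N * M) by rewrite ler_peMl //; apply: mulr_ge0; lra.
  nra.
have h1 : #|S1|%:R <= n`!%:R * ex (2 * n%:R * s^+2 * c^+2 - s * t).
  exact: (@tail_one n h c s c0 s0 sc hc t).
have h2 : #|S2|%:R <= n`!%:R * ex (2 * n%:R * s^+2 * c^+2 - s * t).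
  by have := (@tail_one n (fun q => - h q) c s c0 s0 sc hc' t); rewrite mu_opp.
have expE : 2 * n%:R * s^+2 * c^+2 - s * t = - t^+2 / ((32*k*k)%:R * n%:R^+(2*k-1)).
  rewrite -/N E2 !natrM -/K /s cE alg2 // lt0r_neq0 //; lra.
rewrite -expE ler_pdivrMr //.
lra.
Qed.

Close Scope ring_scope.
Bind Scope R_scope with R.
Delimit Scope R_scope with R.

Theorem mainTheorem12 :
  forall k : nat, (1 <= k)%N ->
  exists C : R, (0 < C)%R /\
    forall (tau : 'S_k) (n : nat), (k <= n)%N ->
    forall t : R, (INR 'C(n.-1, k.-1) <= t)%R ->
      (tail_prob n tau t <= 2 * exp (- (t ^ 2) / (C * INR n ^ (2 * k - 1))))%R.
Proof.
move=> k k1; exists (INR (32 * k * k)); split.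
  apply: lt_0_INR; lia.
Open Scope ring_scope.
Bind Scope ring_scope with R.
move=> tau n kn t ht.
have /RleP t0 : Rle 0 t := Rle_trans _ _ _ (pos_INR _) ht.
have H := @final_ring k n tau t k1 kn t0.
rewrite /tail_prob; apply/RleP.
rewrite !RdivE !RmultE RoppE !RpowE !INRE.
have -> : IZR (Zpos (xO xH)) = 2%:R by rewrite IZRposE INRE.
move: H; rewrite /ex /mean_occ => H.
exact: H.
Qed.
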